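(* Let $p$ be a prime, let $q:\mathbb{F}_p^n\to\mathbb{F}_p$ be a quadratic form and let $b:\mathbb{F}_p^n\times\mathbb{F}_p^n\to\mathbb{F}_p$ be a bilinear form such that $q(x)=b(x,x)$ for every $x\in\mathbb{F}_p^n$. Then $\mathrm{erk}\,q\le\mathrm{erk}\,b$.
   Context: The essential rank of the quadratic form $q$ is $\mathrm{erk}\,q=\min\mathrm{rk}(q+q_\Delta)$ over all diagonal quadratic forms $q_\Delta(x)=\sum_i a_ix_i^2$, where for a polynomial $Q$ of degree $2$, $\mathrm{rk}\,Q$ is the least $k$ such that $Q=\sum_{i=1}^k Q_iR_i$ with polynomials $Q_i,R_i$ of degree at most $1$ (and $\mathrm{rk}$ of a polynomial of degree at most $1$ is defined via the degree-$\le1$ conventions; here we use the degree-2 rank). The essential (partition) rank of the bilinear form $b$ is $\mathrm{erk}\,b=\min\mathrm{rank}(b+b_\Delta)$ over all diagonal bilinear forms $b_\Delta(x,y)=\sum_i c_ix_iy_i$, where rank is matrix rank. *)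

(* Defs.v *)
From HB Require Import structures.
From mathcomp Require Import all_boot all_order all_algebra.
From Stdlib Require Import ClassicalDescription.
Set Implicit Arguments. Unset Strict Implicit. Unset Printing Implicit Defensive.
Import GRing.Theory.
Local Open Scope ring_scope.

Section Forms.
Variables (F : finFieldType) (n : nat).

Definition affine_fun (d : F * 'rV[F]_n) (x : 'rV[F]_n) : F :=
  d.1 + \sum_(i < n) d.2 0 i * x 0 i.

Definition is_quad_form (q : 'rV[F]_n -> F) : Prop :=
  exists c : 'M[F]_n, forall x : 'rV[F]_n,
    q x = \sum_(i < n) \sum_(j < n | (i <= j)%N) c i j * x 0 i * x 0 j.

Definition bform (B : 'M[F]_n) (x y : 'rV[F]_n) : F :=
  \sum_(i < n) \sum_(j < n) x 0 i * B i j * y 0 j.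

Definition diag_qf (a : 'rV[F]_n) (x : 'rV[F]_n) : F :=
  \sum_(i < n) a 0 i * x 0 i ^+ 2.

(* Q = sum_{i<k} Q_i R_i with Q_i, R_i polynomials of degree at most 1
   (identity of functions F^n -> F) *)
Definition rk_le (Q : 'rV[F]_n -> F) (k : nat) : bool :=
  [exists t : {ffun 'I_k -> (F * 'rV[F]_n) * (F * 'rV[F]_n)},
     [forall x : 'rV[F]_n,
        Q x == \sum_(i < k) affine_fun (t i).1 x * affine_fun (t i).2 x]].

(* rk Q = least such k (0 by convention if no such k exists, which never
   happens for the quadratic functions considered here) *)
Definition rk (Q : 'rV[F]_n -> F) : nat :=
  match excluded_middle_informative (exists k, rk_le Q k) with
  | left h => ex_minn h
  | right _ => 0%N
  end.

(* erk q = min over diagonal forms q_Delta of rk (q + q_Delta);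
   the seed rk q is the value at a = 0 *)
Definition erk_q (q : 'rV[F]_n -> F) : nat :=
  \big[minn/(rk q)]_(a : 'rV[F]_n) rk (fun x => q x + diag_qf a x).

Definition erk_b (B : 'M[F]_n) : nat :=
  \big[minn/(\rank B)]_(c : 'rV[F]_n) \rank (B + diag_mx c).

End Forms.

(* Main.v *)
Require Import Defs.
From mathcomp Require Import all_boot all_order all_algebra.
From Stdlib Require Import ClassicalDescription.
From mathcomp Require Import ring.
From Stdlib Require Import FunctionalExtensionality.
Local Open Scope ring_scope.
Import GRing.Theory.

Section H.
Variables (F : finFieldType) (n : nat).

Lemma bform_rk_le0 k (U : 'M[F]_(n, k)) (V : 'M[F]_(k, n)) :
  rk_le (fun x => bform (U *m V) x x) k.
Proof.
apply/existsP; exists [ffun i => ((0, (col i U)^T), (0, row i V))].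
apply/forallP => x; apply/eqP.
rewrite /bform.
under eq_bigr => i _ do under eq_bigr => j _ do
  rewrite !mxE big_distrr /= big_distrl /=.
under [RHS]eq_bigr => l _ do rewrite ffunE /affine_fun /= !add0r big_distrl /=.
under [RHS]eq_bigr => l _ do under eq_bigr => i _ do rewrite big_distrr /=.
rewrite [RHS]exchange_big; apply: eq_bigr => i _.
rewrite [RHS]exchange_big; apply: eq_bigr => j _; apply: eq_bigr => l _.
by rewrite !mxE; ring.
Qed.

Lemma bform_rk_le (M : 'M[F]_n) : rk_le (fun x => bform M x x) (\rank M).
Proof.
have := @bform_rk_le0 _ (col_base M) (row_base M).
by rewrite mulmx_base.
Qed.

Lemma rk_leq (Q : 'rV[F]_n -> F) k : rk_le Q k -> (rk Q <= k)%N.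
Proof.
move=> h; rewrite /rk; case: excluded_middle_informative => [e|ne].
  by case: ex_minnP => m _ /(_ k h).
by case: ne; exists k.
Qed.

Lemma erk_q_le (q : 'rV[F]_n -> F) (a : 'rV[F]_n) : (erk_q q <= rk (fun x => (q x + diag_qf a x)%R))%N.
Proof.
rewrite /erk_q.
have : a \in index_enum 'rV[F]_n by rewrite mem_index_enum.
elim: (index_enum _) => [//|y r IH]; rewrite inE big_cons /=.
case/orP => [/eqP <-|/IH h]; first exact: geq_minl.
by rewrite geq_min h orbT.
Qed.

Lemma bform_diag (B : 'M[F]_n) a x :
  bform (B + diag_mx a) x x = bform B x x + diag_qf a x.
Proof.
rewrite /bform /diag_qf -big_split /=; apply: eq_bigr => i _.
under eq_bigr => j _ do rewrite !mxE mulrDr mulrDl.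
rewrite big_split /=; congr (_ + _).
rewrite (bigD1 i) //= big1 ?addr0; first by rewrite eqxx mulr1n; ring.
by move=> j /negbTE ne; rewrite eq_sym ne mulr0n mulr0 mul0r.
Qed.

End H.

Theorem lemma2p9 (p : nat) (hp : prime p) (n : nat)
  (q : 'rV['F_p]_n -> 'F_p) (B : 'M['F_p]_n) :
  is_quad_form q ->
  (forall x : 'rV['F_p]_n, q x = bform B x x) ->
  (erk_q q <= erk_b B)%N.
Proof.
move=> _ hq.
have key : forall a, (erk_q q <= \rank (B + diag_mx a)%R)%N.
  move=> a; have h1 := @erk_q_le _ _ q a. apply: leq_trans h1 _.
  apply: rk_leq.
  have -> : (fun x => q x + diag_qf a x) = (fun x => bform (B + diag_mx a) x x).
    by apply: functional_extensionality => x; rewrite bform_diag hq.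
  exact (@bform_rk_le _ _ (B + diag_mx a)).
rewrite /erk_b.
elim: (index_enum _) => [|y r IH]; rewrite ?big_nil ?big_cons.
  have e0 : diag_mx (0 : 'rV['F_p]_n) = 0 by apply/matrixP => i j; rewrite !mxE mul0rn.
  by have := key 0; rewrite e0 addr0.
rewrite leq_min IH andbT; apply: leq_trans (key y) _.
by apply: mxrankS; apply: addmx_sub_adds; apply: submx_refl.
Qed.
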